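(* Let $0<r<q-1$, $n\ge1$, $0\le k,s\le q-1$, and let $\begin{pmatrix}a&b\\c&d\end{pmatrix}\in I$. If $s_n^k$ and $t_n^s$ are $I(1)$-invariant modulo $(\mathrm{Ker}\,T_{-1,0},\mathrm{Ker}\,T_{1,2})$, then they are $I$-eigenvectors, with (1) $\begin{pmatrix}a&b\\c&d\end{pmatrix}\cdot s_n^k=\bar d^{\,r}(\bar d\bar a^{-1})^ks_n^k$, (2) $\begin{pmatrix}a&b\\c&d\end{pmatrix}\cdot t_n^s=\bar a^{\,r}(\bar d\bar a^{-1})^st_n^s$.
   Context: $F$ is a finite extension of $\mathbb Q_p$ with ring of integers $\mathcal O$, uniformizer $\varpi$, residue field $\mathbb F_q$; $[x]$ is the multiplicative representative of $x\in\mathbb F_q$, $\bar a\in\mathbb F_q\subset\overline{\mathbb F}_p$ the reduction of $a\in\mathcal O$; convention $0^0=1$. $G=\mathrm{GL}_2(F)$, $K=\mathrm{GL}_2(\mathcal O)$, $Z$ the centre, $I$ the Iwahori subgroup of $K$ (lower-left entry in $\varpi\mathcal O$), $I(1)$ the pro-$p$ Iwahori (elements of $I$ with diagonal entries $\equiv1\bmod\varpi$). $\chi_r:IZ\to\overline{\mathbb F}_p^\times$, $\begin{pmatrix} a&b\\ \varpi c&d\end{pmatrix}\mapsto\bar d^{\,r}$, $\mathrm{diag}(\varpi,\varpi)\mapsto1$; in the compact induction $\mathrm{ind}_{IZ}^G\chi_r$, $[g,1]$ is the element supported on $IZg^{-1}$ with value $1$ at $g^{-1}$, so $h[g,1]=[hg,1]$.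 $\beta=\begin{pmatrix}0&1\\ \varpi&0\end{pmatrix}$, $w=\begin{pmatrix}0&1\\1&0\end{pmatrix}$. $T_{-1,0},T_{1,2}$ are the $G$-endomorphisms with $T_{-1,0}[g,1]=\sum_{\lambda\in I_1}[g\begin{pmatrix}\varpi&\lambda\\0&1\end{pmatrix},1]$, $T_{1,2}[g,1]=\sum_{\lambda\in I_1}[g\beta\begin{pmatrix}1&\lambda\\0&1\end{pmatrix}w,1]$; $(\mathrm{Ker}\,T_{-1,0},\mathrm{Ker}\,T_{1,2})$ denotes $\mathrm{Ker}\,T_{-1,0}+\mathrm{Ker}\,T_{1,2}$. $I_n=\{\sum_{i=0}^{n-1}[\mu_i]\varpi^i:\mu_i\in\mathbb F_q\}$, digits $\mu_i$, truncation $[\mu]_m=\sum_{i<m}[\mu_i]\varpi^i$. $s_n^k=\sum_{\mu\in I_n}\mu_{n-1}^k[\begin{pmatrix}\varpi^n&\mu\\0&1\end{pmatrix},1]$ and $t_n^s=\sum_{\mu\in I_n}\mu_{n-1}^s[\begin{pmatrix}\varpi^{n-1}&[\mu]_{n-1}\\0&1\end{pmatrix}\begin{pmatrix}1&[\mu_{n-1}]\\0&1\end{pmatrix}w,1]$. *)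

(* Defs.v *)
From HB Require Import structures.
From mathcomp Require Import all_boot all_algebra.
From Stdlib Require Import ClassicalEpsilon.
Set Implicit Arguments.
Unset Strict Implicit.
Unset Printing Implicit Defensive.
Import GRing.Theory.
Local Open Scope ring_scope.

(* A p-adic field F (finite extension of Q_p), presented as a complete
   discretely valued field of characteristic 0 with finite residue field
   of characteristic p. *)
Record padic_field := PadicField {
  pf_F : fieldType;
  pf_O : pred pf_F;
  pf_pi : pf_F;
  pf_k : finFieldType;
  pf_p : nat;
  pf_red : pf_F -> pf_k;
  pf_teich : pf_k -> pf_F;
  pf_O0 : pf_O 0;
  pf_O1 : pf_O 1;
  pf_OB : forall x y, pf_O x -> pf_O y -> pf_O (x - y);
  pf_OM : forall x y, pf_O x -> pf_O y -> pf_O (x * y);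
  pf_piO : pf_O pf_pi;
  pf_pi_neq0 : pf_pi != 0;
  pf_pi_nonunit : ~~ pf_O pf_pi^-1;
  pf_decomp : forall x, x != 0 ->
     exists m : int, exists2 u, pf_O u && pf_O u^-1 & x = u * pf_pi ^ m;
  pf_complete : forall c : nat -> pf_F, (forall i, pf_O (c i)) ->
     exists2 x, pf_O x & forall n, pf_O ((x - \sum_(i < n) c i * pf_pi ^+ i) / pf_pi ^+ n);
  pf_red1 : pf_red 1 = 1;
  pf_redD : forall x y, pf_O x -> pf_O y -> pf_red (x + y) = pf_red x + pf_red y;
  pf_redM : forall x y, pf_O x -> pf_O y -> pf_red (x * y) = pf_red x * pf_red y;
  pf_red_ker : forall x, pf_O x -> (pf_red x == 0) = pf_O (x / pf_pi);
  pf_red_surj : forall c, exists2 x, pf_O x & pf_red x = c;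
  pf_teichO : forall c, pf_O (pf_teich c);
  pf_teich_red : forall c, pf_red (pf_teich c) = c;
  pf_teichM : forall c d, pf_teich (c * d) = pf_teich c * pf_teich d;
  pf_char0 : [pchar pf_F] =i pred0;
  pf_p_prime : prime pf_p;
  pf_p_char : pf_p \in [pchar pf_k]
}.

Definition i0 : 'I_2 := ord0.
Definition i1 : 'I_2 := ord_max.

Definition mx2 (R : Type) (a b c d : R) : 'M[R]_2 :=
  \matrix_(i < 2, j < 2)
    if i == i0 then (if j == i0 then a else b) else (if j == i0 then c else d).

Section Ind.
Variable LF : padic_field.
Local Notation F := (pf_F LF).
Local Notation O := (@pf_O LF).
Local Notation pi := (@pf_pi LF).
Local Notation kq := (pf_k LF).
Local Notation red := (@pf_red LF).
Local Notation teich := (@pf_teich LF).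

Definition in_I (g : 'M[F]_2) : Prop :=
  [/\ O (g i0 i0), O (g i0 i1), O (g i1 i0 / pi), O (g i1 i1)
    & (\det g != 0) && O (\det g)^-1].

Definition in_I1 (g : 'M[F]_2) : Prop :=
  [/\ in_I g, red (g i0 i0) = 1 & red (g i1 i1) = 1].

Definition betamx : 'M[F]_2 := mx2 0 1 pi 0.
Definition wmx : 'M[F]_2 := mx2 0 1 1 0.

Variable K : fieldType.
Variable iota : kq -> K.
Variable r : nat.

(* chi_r on IZ = { varpi^m h : h in I }, extended by 0 outside IZ *)
Definition chiIZ (x : 'M[F]_2) : K :=
  match excluded_middle_informative (exists m : int, in_I (pi ^ (- m) *: x)) with
  | left H =>
      let m := proj1_sig (constructive_indefinite_description _ H) in
      iota (red ((pi ^ (- m) *: x) i1 i1)) ^+ r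
  | right _ => 0
  end.

(* elements of ind_{IZ}^G chi_r are functions G -> K; [g,1] is x |-> chi(x g) *)
Definition br (g : 'M[F]_2) : 'M[F]_2 -> K := fun x => chiIZ (x *m g).

(* G-action: (h f)(x) = f(x h), so that h [g,1] = [hg,1] *)
Definition act (h : 'M[F]_2) (f : 'M[F]_2 -> K) : 'M[F]_2 -> K :=
  fun x => f (x *m h).

(* the element sum_{i<m} [mu_i] varpi^i of I_m with digits d *)
Definition trunc (m : nat) (d : seq kq) : F :=
  \sum_(i < m) teich (nth 0 d i) * pi ^+ i.

Definition s_nk (n k : nat) : 'M[F]_2 -> K := fun x =>
  \sum_(d : n.-tuple kq)
     iota (nth 0 (tval d) n.-1) ^+ k * br (mx2 (pi ^+ n) (trunc n d) 0 1) x.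

Definition t_ns (n s : nat) : 'M[F]_2 -> K := fun x =>
  \sum_(d : n.-tuple kq)
     iota (nth 0 (tval d) n.-1) ^+ s *
       br (mx2 (pi ^+ n.-1) (trunc n.-1 d) 0 1
           *m mx2 1 (teich (nth 0 (tval d) n.-1)) 0 1 *m wmx) x.

(* T_{-1,0}[g,1] and T_{1,2}[g,1]; I_1 = { [c] : c in F_q } *)
Definition Tm10 (g : 'M[F]_2) : 'M[F]_2 -> K := fun x =>
  \sum_(c : kq) br (g *m mx2 pi (teich c) 0 1) x.
Definition T12 (g : 'M[F]_2) : 'M[F]_2 -> K := fun x =>
  \sum_(c : kq) br (g *m betamx *m mx2 1 (teich c) 0 1 *m wmx) x.

(* finite formal combinations sum c_i [g_i,1] and the extension of T by linearity *)
Definition evalL (L : seq (K * 'M[F]_2)) : 'M[F]_2 -> K := fun x =>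
  \sum_(q <- L) q.1 * br q.2 x.
Definition applyT (T : 'M[F]_2 -> 'M[F]_2 -> K) (L : seq (K * 'M[F]_2))
  : 'M[F]_2 -> K := fun x => \sum_(q <- L) q.1 * T q.2 x.

Definition inKerSum (f : 'M[F]_2 -> K) : Prop :=
  exists L1 L2,
    (forall x, f x = evalL L1 x + evalL L2 x) /\
    (forall x, applyT Tm10 L1 x = 0) /\ (forall x, applyT T12 L2 x = 0).

Definition I1_inv_mod (f : 'M[F]_2 -> K) : Prop :=
  forall u, in_I1 u -> inKerSum (fun x => act u f x - f x).

Definition eigen_mod (h : 'M[F]_2) (e : K) (f : 'M[F]_2 -> K) : Prop :=
  inKerSum (fun x => act h f x - e * f x).

End Ind.

(* Main.v *)
Require Import Defs.
From HB Require Import structures.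
From mathcomp Require Import all_boot all_algebra.
From mathcomp Require Import ring zify.
From Stdlib Require Import ClassicalEpsilon.
Import GRing.Theory.
Local Open Scope ring_scope.

Lemma mx2_mul (R : comNzRingType) (a b c d a' b' c' d' : R) :
  mx2 a b c d *m mx2 a' b' c' d' =
  mx2 (a*a'+b*c') (a*b'+b*d') (c*a'+d*c') (c*b'+d*d').
Proof.
apply/matrixP => i j; rewrite !mxE big_ord_recl big_ord1 !mxE.
by case: i => [[|[|i]] Hi]; case: j => [[|[|j]] Hj].
Qed.

Lemma mx2_eta (R : Type) (A : 'M[R]_2) :
  A = mx2 (A i0 i0) (A i0 i1) (A i1 i0) (A i1 i1).
Proof.
apply/matrixP => i j; rewrite !mxE.
case: i => [[|[|i]] Hi]; case: j => [[|[|j]] Hj] //=; by congr (A _ _); apply: val_inj.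
Qed.

Lemma mx2_det (R : comNzRingType) (a b c d : R) : \det (mx2 a b c d) = a * d - b * c.
Proof.
rewrite (expand_det_row _ ord0) big_ord_recl big_ord1 /cofactor !det_mx11 !mxE /=.
by rewrite expr0 expr1 mul1r mulN1r mulrN.
Qed.

Lemma mx2E (R : Type) (a b c d : R) :
  (mx2 a b c d i0 i0 = a) * (mx2 a b c d i0 i1 = b) *
  (mx2 a b c d i1 i0 = c) * (mx2 a b c d i1 i1 = d).
Proof. by rewrite !mxE. Qed.

Lemma mx2_1 (R : comNzRingType) : mx2 1 0 0 1 = 1%:M :> 'M[R]_2.
Proof.
apply/matrixP => i j; rewrite !mxE.
by case: i => [[|[|i]] Hi]; case: j => [[|[|j]] Hj].
Qed.

Section S.
Variable LF : padic_field.
Local Notation F := (pf_F LF).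
Local Notation O := (@pf_O LF).
Local Notation pi := (@pf_pi LF).
Local Notation kq := (pf_k LF).
Local Notation red := (@pf_red LF).
Local Notation teich := (@pf_teich LF).

Lemma OM {x y} : O x -> O y -> O (x * y). Proof. exact: pf_OM. Qed.
Lemma OB {x y} : O x -> O y -> O (x - y). Proof. exact: pf_OB. Qed.
Lemma ON {x} : O x -> O (- x).
Proof. by move=> h; have := OB (@pf_O0 LF) h; rewrite sub0r. Qed.
Lemma OD {x y} : O x -> O y -> O (x + y).
Proof. by move=> hx hy; have := OB hx (ON hy); rewrite opprK. Qed.
Lemma Opow N : O (pi ^+ N).
Proof. elim: N => [|N IH]; first by rewrite expr0 pf_O1. by rewrite exprS OM // pf_piO. Qed.

Lemma redB {x y} : O x -> O y -> red (x - y) = red x - red y.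
Proof. by move=> hx hy; have := pf_redD (OB hx hy) hy; rewrite subrK => ->; rewrite addrK. Qed.
Lemma red0 : red 0 = 0.
Proof. by have := redB (@pf_O0 LF) (@pf_O0 LF); rewrite !subrr. Qed.
Lemma red_pi : red pi = 0.
Proof. by have := pf_red_ker (@pf_piO LF); rewrite divff ?pf_pi_neq0 // pf_O1 => /eqP. Qed.
Lemma teich_neq0 c : c != 0 -> teich c != 0.
Proof.
move=> cnz; apply/eqP => H; move: (pf_teich_red c); rewrite H red0 => /eqP.
by rewrite eq_sym (negbTE cnz).
Qed.
Lemma teich1 : teich 1 = 1.
Proof.
have tnz : teich 1 != 0 by apply: teich_neq0; exact: oner_neq0.
by apply: (mulfI tnz); rewrite mulr1 -pf_teichM mulr1.
Qed.
Lemma teichV c : c != 0 -> teich c^-1 = (teich c)^-1.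
Proof.
move=> cnz; have H : teich c * teich c^-1 = 1 by rewrite -pf_teichM divff // teich1.
by rewrite -[RHS]mulr1 -H mulKf // teich_neq0.
Qed.

Lemma noinv N : ~~ O ((pi ^+ N.+1)^-1).
Proof.
apply/negP => H; apply: (negP (@pf_pi_nonunit LF)).
have -> : pi^-1 = (pi^+N.+1)^-1 * pi^+N.
  by rewrite exprS invfM -mulrA mulVf ?mulr1 // expf_neq0 // pf_pi_neq0.
exact: OM H (Opow N).
Qed.

Lemma val0 {i : int} : O (pi ^ i) -> O (pi ^ (- i)) -> i = 0.
Proof.
case: i => [[|N]|N] // H1 H2.
  by move: H2; rewrite -exprnN (negbTE (noinv N)).
by move: H1; rewrite /exprz (negbTE (noinv N)).
Qed.

Lemma pnz : pi != 0. Proof. exact: pf_pi_neq0. Qed.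

Lemma in_I_mx2 a b c d : in_I (mx2 a b c d) <->
  [/\ O a, O b, O (c / pi), O d & (a*d-b*c != 0) && O (a*d-b*c)^-1].
Proof. by rewrite /in_I !mx2E mx2_det. Qed.

Lemma O_of_div {c} : O (c / pi) -> O c.
Proof. by move=> h; rewrite -(divfK pnz c); apply: OM h (@pf_piO LF). Qed.

Lemma in_I_O_det {g} : in_I g -> O (\det g).
Proof.
rewrite [g]mx2_eta in_I_mx2 mx2_det => -[ha hb /O_of_div hc hd _].
by apply: OB; apply: OM.
Qed.

Definition unitO x := [&& x != 0, O x & O x^-1].

Lemma unitOV {x} : unitO x -> unitO x^-1.
Proof. by case/and3P => h1 h2 h3; rewrite /unitO invr_eq0 invrK h1 h2 h3. Qed.

Lemma in_I_diag' z00 z01 z10 z11 al de : unitO al -> unitO de ->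
  in_I (mx2 z00 z01 z10 z11) -> in_I (mx2 z00 z01 z10 z11 *m mx2 al 0 0 de).
Proof.
case/and3P => a1 a2 a3; case/and3P => d1 d2 d3.
rewrite mx2_mul !in_I_mx2 !mulr0 !addr0 !add0r => -[h1 h2 h3 h4 /andP[h5 h6]].
have -> : z00 * al * (z11 * de) - z01 * de * (z10 * al) = (z00 * z11 - z01 * z10) * (al * de) by ring.
split; try by apply: OM.
  by rewrite mulrAC; apply: OM.
by rewrite !mulf_neq0 //= !invfM; apply: OM => //; apply: OM.
Qed.

Lemma in_I_diag {z al de} : unitO al -> unitO de -> in_I z -> in_I (z *m mx2 al 0 0 de).
Proof. by move=> ha hd H; rewrite [z]mx2_eta in H *; apply: in_I_diag'. Qed.

Lemma diag_inv al de : al != 0 -> de != 0 ->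
  mx2 al 0 0 de *m mx2 al^-1 0 0 de^-1 = 1%:M :> 'M[F]_2.
Proof.
by move=> ha hd; rewrite mx2_mul !mulr0 !mul0r !addr0 !add0r !divff // mx2_1.
Qed.

Lemma in_I_diagE {z al de} : unitO al -> unitO de -> in_I (z *m mx2 al 0 0 de) <-> in_I z.
Proof.
move=> ha hd; split; last exact: in_I_diag.
move=> H; have := in_I_diag (unitOV ha) (unitOV hd) H.
by rewrite -mulmxA diag_inv ?mulmx1 //; [case/and3P: ha | case/and3P: hd].
Qed.

Lemma entry11 (z : 'M[F]_2) al de : (z *m mx2 al 0 0 de) i1 i1 = z i1 i1 * de.
Proof. by rewrite [z]mx2_eta mx2_mul !mx2E mulr0 add0r. Qed.

Lemma uniq_m {y m m'} : in_I (pi^(-m) *: y) -> in_I (pi^(-m') *: y) -> m = m'.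
Proof.
move=> H1 H2.
have O1 := in_I_O_det H1; have O2 := in_I_O_det H2.
case: H1 => _ _ _ _ /andP[n1 i1']; case: H2 => _ _ _ _ /andP[n2 i2'].
rewrite detZ in O1; rewrite detZ in O2; rewrite detZ in n1; rewrite detZ in n2.
rewrite detZ in i1'; rewrite detZ in i2'.
set D := \det y in O1 O2 n1 n2 i1' i2'.
set p1 := pi ^ (- m) in O1 n1 i1'; set p2 := pi ^ (- m') in O2 n2 i2'.
have Dnz : D != 0 by move: n1; rewrite mulf_eq0 negb_or => /andP[].
have p2nz : p2 != 0 by rewrite expfz_neq0 // pnz.
have e1 : (p1 ^+ 2 * D) / (p2 ^+ 2 * D) = pi ^ ((- m + m') + (- m + m')).
  rewrite invfM mulrACA divff // mulr1 -expr_div_n /p1 /p2 invr_expz opprK.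
  by rewrite -(expfzDr _ _ pnz) expr2 -(expfzDr _ _ pnz).
have Oa : O (pi ^ ((- m + m') + (- m + m'))) by rewrite -e1; apply: OM.
have Ob : O (pi ^ (- ((- m + m') + (- m + m')))).
  by rewrite -invr_expz -e1 invf_div; apply: OM.
have := val0 Oa Ob; lia.
Qed.

Variables (K : fieldType) (iota : {rmorphism kq -> K}) (r : nat).

Lemma chiIZ_some {y m} : in_I (pi^(-m) *: y) ->
  chiIZ iota r y = iota (red ((pi^(-m) *: y) i1 i1)) ^+ r.
Proof.
move=> H; rewrite /chiIZ; case: excluded_middle_informative => [H1|N1]; last first.
  by exfalso; apply: N1; exists m.
case: (constructive_indefinite_description _ H1) => m1 Hm1 /=.
by rewrite (uniq_m Hm1 H).
Qed.

Lemma chiIZ_none y : ~ (exists m, in_I (pi^(-m) *: y)) -> chiIZ iota r y = 0.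
Proof. by move=> N; rewrite /chiIZ; case: excluded_middle_informative. Qed.

Lemma chiIZ_diag y al de : unitO al -> unitO de ->
  chiIZ iota r (y *m mx2 al 0 0 de) = chiIZ iota r y * iota (red de) ^+ r.
Proof.
move=> ha hd.
case: (excluded_middle_informative (exists m, in_I (pi^(-m) *: y))) => [[m Hm]|N].
  have Hm' : in_I (pi^(-m) *: (y *m mx2 al 0 0 de)) by rewrite scalemxAl; apply: in_I_diag.
  rewrite (chiIZ_some Hm') (chiIZ_some Hm) scalemxAl entry11.
  case: Hm => _ _ _ h4 _; case/and3P: hd => _ hd _.
  by rewrite pf_redM // rmorphM exprMn.
rewrite !chiIZ_none ?mul0r //.
move=> [m Hm]; apply: N; exists m; rewrite scalemxAl in Hm.
exact: (in_I_diagE ha hd).1 Hm.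
Qed.

Lemma inKerSum_ext {f g} : (forall x, f x = g x) -> inKerSum iota r f -> inKerSum iota r g.
Proof. by move=> e [L1 [L2 [H [H1 H2]]]]; exists L1, L2; split => // x; rewrite -e H. Qed.

Lemma inKerSum_act h {f} : inKerSum iota r f -> inKerSum iota r (act h f).
Proof.
move=> [L1 [L2 [H [H1 H2]]]].
exists (map (fun q => (q.1, h *m q.2)) L1), (map (fun q => (q.1, h *m q.2)) L2).
split; [|split] => x.
- rewrite /act H /evalL !big_map /br; congr (_ + _); apply: eq_bigr => q _ /=;
  by rewrite mulmxA.
- transitivity (applyT (Tm10 iota r) L1 (x *m h)); last exact: H1.
  rewrite /applyT big_map; apply: eq_bigr => q _ /=; congr (_ * _).
  by rewrite /Tm10 /br; apply: eq_bigr => c _; rewrite !mulmxA.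
- transitivity (applyT (T12 iota r) L2 (x *m h)); last exact: H2.
  rewrite /applyT big_map; apply: eq_bigr => q _ /=; congr (_ * _).
  by rewrite /T12 /br; apply: eq_bigr => c _; rewrite !mulmxA.
Qed.

Lemma eigen_from {h t u e f} : (forall x, act t f x = e * f x) ->
  I1_inv_mod iota r f -> in_I1 u -> h = t *m u -> eigen_mod iota r h e f.
Proof.
move=> Ht Hinv Hu ->; have := inKerSum_act t (Hinv u Hu).
by apply: inKerSum_ext => x; rewrite -Ht /act /= mulmxA.
Qed.

Lemma nth_map0 (c : kq) s i : nth 0 (map (fun y => c * y) s) i = c * nth 0 s i.
Proof. elim: s i => [|x s IH] [|i] //=; by rewrite mulr0. Qed.

Lemma trunc_map (c : kq) m s : trunc m (map (fun y => c * y) s) = teich c * trunc m s.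
Proof.
by rewrite /trunc mulr_sumr; apply: eq_bigr => i _; rewrite nth_map0 pf_teichM mulrA.
Qed.

Lemma unitO_teich (c : kq) : c != 0 -> unitO (teich c).
Proof. by move=> cnz; rewrite /unitO teich_neq0 // pf_teichO -teichV // pf_teichO. Qed.

Lemma tuple_inj n {c : kq} : c != 0 ->
  injective (fun t : n.-tuple kq => map_tuple (fun y => c * y) t).
Proof.
move=> cnz t1 t2 /(congr1 val) /= /(inj_map (mulfI cnz)); exact: val_inj.
Qed.

Lemma act_s (c d0 : kq) n k x : c != 0 -> d0 != 0 ->
  act (mx2 (teich (c * d0)) 0 0 (teich d0)) (s_nk iota r n k) x
  = iota d0 ^+ r * (iota c ^+ k)^-1 * s_nk iota r n k x.
Proof.
move=> cnz dnz.
rewrite /act /s_nk [in RHS](reindex_inj (tuple_inj n cnz)) mulr_sumr.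
apply: eq_bigr => t _ /=.
rewrite nth_map0 trunc_map /br -mulmxA.
have -> : mx2 (teich (c * d0)) 0 0 (teich d0) *m mx2 (pi ^+ n) (trunc n t) 0 1
   = mx2 (pi ^+ n) (teich c * trunc n t) 0 1 *m mx2 (teich (c * d0)) 0 0 (teich d0).
  by rewrite !mx2_mul pf_teichM; congr mx2; ring.
rewrite mulmxA chiIZ_diag ?unitO_teich ?mulf_neq0 // pf_teich_red rmorphM exprMn.
have Xnz : iota c ^+ k != 0 by rewrite expf_neq0 // fmorph_eq0.
by field.
Qed.

Lemma act_t (c d0 : kq) n s x : c != 0 -> d0 != 0 ->
  act (mx2 (teich (c * d0)) 0 0 (teich d0)) (t_ns iota r n s) x
  = iota (c * d0) ^+ r * (iota c ^+ s)^-1 * t_ns iota r n s x.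
Proof.
move=> cnz dnz.
rewrite /act /t_ns [in RHS](reindex_inj (tuple_inj n cnz)) mulr_sumr.
apply: eq_bigr => t _ /=.
rewrite !nth_map0 trunc_map /br -mulmxA.
have -> : mx2 (teich (c * d0)) 0 0 (teich d0) *m
     (mx2 (pi ^+ n.-1) (trunc n.-1 t) 0 1 *m mx2 1 (teich (nth 0 t n.-1)) 0 1 *m wmx LF)
   = (mx2 (pi ^+ n.-1) (teich c * trunc n.-1 t) 0 1 *m mx2 1 (teich (c * nth 0 t n.-1)) 0 1 *m wmx LF)
     *m mx2 (teich d0) 0 0 (teich (c * d0)).
  by rewrite /wmx !mx2_mul !pf_teichM; congr mx2; ring.
rewrite mulmxA chiIZ_diag ?unitO_teich ?mulf_neq0 // pf_teich_red !rmorphM !exprMn.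
have Xnz : iota c ^+ s != 0 by rewrite expf_neq0 // fmorph_eq0.
by field.
Qed.

End S.

Section S2.
Variable LF : padic_field.
Local Notation F := (pf_F LF).
Local Notation O := (@pf_O LF).
Local Notation pi := (@pf_pi LF).
Local Notation kq := (pf_k LF).
Local Notation red := (@pf_red LF).
Local Notation teich := (@pf_teich LF).

Lemma decomp (a b c d : F) : in_I (mx2 a b c d) ->
  [/\ red a != 0, red d != 0 & exists u, in_I1 u /\
     mx2 a b c d = mx2 (teich (red a)) 0 0 (teich (red d)) *m u].
Proof.
case/in_I_mx2 => ha hb hc hd /andP[dnz dinv].
have hc' := O_of_div _ hc.
have Odet : O (a * d - b * c) by apply: OB; apply: OM.
have rdet : red (a * d - b * c) = red a * red d.
  rewrite redB ?OM // !pf_redM // -(divfK (@pnz LF) c) pf_redM ?pf_piO //.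
  by rewrite red_pi !mulr0 subr0.
have rdnz : red (a * d - b * c) != 0.
  apply/eqP => h0; have := pf_redM Odet dinv.
  by rewrite mulfV // pf_red1 h0 mul0r => /eqP; rewrite oner_eq0.
have ra : red a != 0 by move: rdnz; rewrite rdet mulf_eq0 negb_or => /andP[].
have rd : red d != 0 by move: rdnz; rewrite rdet mulf_eq0 negb_or => /andP[].
split => //.
have alnz : teich (red a) != 0 := teich_neq0 _ _ ra.
have denz : teich (red d) != 0 := teich_neq0 _ _ rd.
have alV : O (teich (red a))^-1 by rewrite -teichV // pf_teichO.
have deV : O (teich (red d))^-1 by rewrite -teichV // pf_teichO.
set al := teich (red a) in alnz alV *; set de := teich (red d) in denz deV *.
exists (mx2 (al^-1 * a) (al^-1 * b) (de^-1 * c) (de^-1 * d)); split.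
  split.
  - apply/in_I_mx2; split; try by apply: OM.
      by rewrite -mulrA; apply: OM.
    have -> : al^-1 * a * (de^-1 * d) - al^-1 * b * (de^-1 * c)
            = (al^-1 * de^-1) * (a * d - b * c) by ring.
    rewrite !mulf_neq0 ?invr_eq0 //= !invfM !invrK.
    by apply: OM => //; apply: OM; rewrite /al /de pf_teichO.
  - by rewrite !mx2E pf_redM // /al -teichV // pf_teich_red mulVf.
  - by rewrite !mx2E pf_redM // /de -teichV // pf_teich_red mulVf.
by rewrite mx2_mul !mul0r !addr0 !add0r !mulVKf.
Qed.
End S2.

Theorem lemma4p3 (LF : padic_field) (K : closedFieldType)
  (iota : {rmorphism pf_k LF -> K})
  (HK : forall x : K, exists2 m, (0 < m)%N & x ^+ (pf_p LF ^ m) = x)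
  (r n k s : nat) (a b c d : pf_F LF) :
  (0 < r)%N -> (r < #|pf_k LF| - 1)%N -> (1 <= n)%N ->
  (k <= #|pf_k LF| - 1)%N -> (s <= #|pf_k LF| - 1)%N ->
  in_I (mx2 a b c d) ->
  I1_inv_mod iota r (s_nk iota r n k) ->
  I1_inv_mod iota r (t_ns iota r n s) ->
  eigen_mod iota r (mx2 a b c d)
    (iota (@pf_red LF d) ^+ r * (iota (@pf_red LF d) / iota (@pf_red LF a)) ^+ k)
    (s_nk iota r n k)
  /\
  eigen_mod iota r (mx2 a b c d)
    (iota (@pf_red LF a) ^+ r * (iota (@pf_red LF d) / iota (@pf_red LF a)) ^+ s)
    (t_ns iota r n s).
Proof.
move=> _ _ _ _ _ HI Hs Ht.
have [ra rd [u [Hu Heq]]] := decomp _ _ _ _ _ HI.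
set c0 := pf_red a / pf_red d.
have c0nz : c0 != 0 by rewrite mulf_neq0 ?invr_eq0.
have e0 : c0 * pf_red d = pf_red a by rewrite divfK.
rewrite -e0 in Heq.
have ee : forall j, (iota (pf_red d) / iota (pf_red a)) ^+ j = (iota c0 ^+ j)^-1.
  by move=> j; rewrite fmorph_div -exprVn invf_div.
split.
  apply: (eigen_from _ _ _ _ _ Hs Hu Heq) => x.
  by rewrite act_s // ee.
apply: (eigen_from _ _ _ _ _ Ht Hu Heq) => x.
by rewrite act_t // ee e0.
Qed.
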